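(* Let $S\subset\mathbb{Z}^d$ be a finite set (not necessarily symmetric), $\mathcal{P}=\{P_\alpha\}_{\alpha\in S}$ a resolution of unity on $\mathbb{C}^D$, $C$ a $D\times D$ unitary matrix with $C^2=I$ that is not a scalar multiple of the identity, $\mathcal{S}=\sum_{\alpha\in S}\tau^\alpha P_\alpha$, and $U_C=\mathcal{S}^*C\mathcal{S}C$ on $\ell^2(\mathbb{Z}^d,\mathbb{C}^D)$. If $\dim\mathcal{E}(1)<\dim\mathcal{E}(-1)$, then $U_C$ has eigenvalue $1$; consequently there exist a nonzero $\phi\in\mathbb{C}^D$ and $x_o\in\mathbb{Z}^d$ with $\limsup_{n\to\infty}\|U_C^n(\delta_0\otimes\phi)(x_o)\|^2>0$.
   Context: A resolution of unity: orthogonal projections $P_\alpha$ on $\mathbb{C}^D$, $P_\alpha P_\beta=0$ ($\alpha\neq\beta$), $\sum_\alpha P_\alpha=I$. $(\tau^\alpha f)(x)=f(x-\alpha)$; $C$ acts pointwise on $\ell^2(\mathbb{Z}^d,\mathbb{C}^D)$. $\mathcal{E}(\pm1)$ are the eigenspaces of $C$ for $\pm1$. $\delta_0\otimes\phi$ equals $\phi$ at $0$ and $0$ elsewhere. Eigenvalue means point spectrum. *)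

(* Defs.v *)
From Stdlib Require Import Reals ZArith List.
Open Scope R_scope.

Record Cx := mkC { re : R ; im : R }.
Definition Czero : Cx := mkC 0 0.
Definition Cone : Cx := mkC 1 0.
Definition Cadd (a b : Cx) : Cx := mkC (re a + re b) (im a + im b).
Definition Copp (a : Cx) : Cx := mkC (- re a) (- im a).
Definition Cmul (a b : Cx) : Cx :=
  mkC (re a * re b - im a * im b) (re a * im b + im a * re b).
Definition Cconj (a : Cx) : Cx := mkC (re a) (- im a).
Definition Cnorm2 (a : Cx) : R := re a ^ 2 + im a ^ 2.

Fixpoint csum (n : nat) (f : nat -> Cx) : Cx :=
  match n with O => Czero | S m => Cadd (csum m f) (f m) end.
Fixpoint rsum (n : nat) (f : nat -> R) : R :=
  match n with O => 0 | S m => rsum m f + f m end.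

(** * Vectors of C^D and D x D matrices (only indices < D are meaningful) *)
Definition cvec := nat -> Cx.
Definition cmat := nat -> nat -> Cx.
Definition vec_eq (D : nat) (u v : cvec) : Prop := forall i, (i < D)%nat -> u i = v i.
Definition mat_eq (D : nat) (A B : cmat) : Prop :=
  forall i j, (i < D)%nat -> (j < D)%nat -> A i j = B i j.
Definition vzero : cvec := fun _ => Czero.
Definition vadd (u v : cvec) : cvec := fun i => Cadd (u i) (v i).
Definition vscal (c : Cx) (u : cvec) : cvec := fun i => Cmul c (u i).
Definition vnorm2 (D : nat) (v : cvec) : R := rsum D (fun i => Cnorm2 (v i)).
Definition mId : cmat := fun i j => if Nat.eqb i j then Cone else Czero.
Definition mzero : cmat := fun _ _ => Czero.
Definition mscal (c : Cx) (A : cmat) : cmat := fun i j => Cmul c (A i j).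
Definition madd (A B : cmat) : cmat := fun i j => Cadd (A i j) (B i j).
Definition mmul (D : nat) (A B : cmat) : cmat :=
  fun i j => csum D (fun k => Cmul (A i k) (B k j)).
Definition madj (A : cmat) : cmat := fun i j => Cconj (A j i).
Definition mvmul (D : nat) (A : cmat) (v : cvec) : cvec :=
  fun i => csum D (fun j => Cmul (A i j) (v j)).

Definition unitary (D : nat) (A : cmat) : Prop :=
  mat_eq D (mmul D (madj A) A) mId /\ mat_eq D (mmul D A (madj A)) mId.
Definition orth_proj (D : nat) (P : cmat) : Prop :=
  mat_eq D (madj P) P /\ mat_eq D (mmul D P P) P.

(** * The lattice Z^d : points are maps nat -> Z vanishing at coordinates >= d *)
Definition pt := nat -> Z.
Definition Zpt (d : nat) (x : pt) : Prop := forall k, (d <= k)%nat -> x k = 0%Z.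
Definition zsub (x a : pt) : pt := fun k => (x k - a k)%Z.
Definition zadd (x a : pt) : pt := fun k => (x k + a k)%Z.
Fixpoint is_origin (d : nat) (x : pt) : bool :=
  match d with O => true | S n => Z.eqb (x n) 0 && is_origin n x end.

Definition lsum {A : Type} (L : list A) (F : A -> cmat) : cmat :=
  fold_right (fun a acc => madd (F a) acc) mzero L.
Definition lvsum {A : Type} (L : list A) (F : A -> cvec) : cvec :=
  fold_right (fun a acc => vadd (F a) acc) vzero L.

(** Resolution of unity {P_a}_{a in S} on C^D, S a finite subset of Z^d
    (given as a duplicate-free list of lattice points). *)
Definition resolution_of_unity (d D : nat) (S : list pt) (P : pt -> cmat) : Prop :=
  NoDup S /\ Forall (Zpt d) S /\
  (forall a, In a S -> orth_proj D (P a)) /\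
  (forall a b, In a S -> In b S -> a <> b -> mat_eq D (mmul D (P a) (P b)) mzero) /\
  mat_eq D (lsum S P) mId.

Definition field := pt -> cvec.
Definition feq (d D : nat) (f g : field) : Prop :=
  forall x, Zpt d x -> vec_eq D (f x) (g x).
Definition fnonzero (d D : nat) (f : field) : Prop :=
  exists x, Zpt d x /\ exists i, (i < D)%nat /\ f x i <> Czero.
(** membership in l^2(Z^d, C^D): the partial sums of sum_x ||f(x)||^2 over
    finite sets of lattice points are bounded *)
Definition l2 (d D : nat) (f : field) : Prop :=
  exists M : R, forall L : list pt, NoDup L -> Forall (Zpt d) L ->
    fold_right (fun x acc => vnorm2 D (f x) + acc) 0 L <= M.

(** shift  S = sum_{a in S} tau^a P_a, with (tau^a f)(x) = f(x - a) *)
Definition Shift (D : nat) (S : list pt) (P : pt -> cmat) (f : field) : field :=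
  fun x => lvsum S (fun a => mvmul D (P a) (f (zsub x a))).
Definition ShiftAdj (D : nat) (S : list pt) (P : pt -> cmat) (f : field) : field :=
  fun x => lvsum S (fun a => mvmul D (madj (P a)) (f (zadd x a))).
Definition Coin (D : nat) (C : cmat) (f : field) : field := fun x => mvmul D C (f x).
Definition UC (D : nat) (S : list pt) (P : pt -> cmat) (C : cmat) (f : field) : field :=
  ShiftAdj D S P (Coin D C (Shift D S P (Coin D C f))).

Definition is_eigenvalue (d D : nat) (T : field -> field) (lam : Cx) : Prop :=
  exists f, l2 d D f /\ fnonzero d D f /\ feq d D (T f) (fun x => vscal lam (f x)).

Definition in_eigenspace (D : nat) (C : cmat) (lam : Cx) (v : cvec) : Prop :=
  vec_eq D (mvmul D C v) (vscal lam v).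
Definition lin_indep (D k : nat) (w : nat -> cvec) : Prop :=
  forall c : nat -> Cx,
    (forall i, (i < D)%nat -> csum k (fun j => Cmul (c j) (w j i)) = Czero) ->
    forall j, (j < k)%nat -> c j = Czero.
Definition dim_ge (D : nat) (E : cvec -> Prop) (k : nat) : Prop :=
  exists w : nat -> cvec, (forall j, (j < k)%nat -> E (w j)) /\ lin_indep D k w.
(** dim E1 < dim E2  (dim = largest k with k independent vectors) *)
Definition dim_lt (D : nat) (E1 E2 : cvec -> Prop) : Prop :=
  exists k, dim_ge D E2 k /\ ~ dim_ge D E1 k.

Definition delta0 (d : nat) (phi : cvec) : field :=
  fun x => if is_origin d x then phi else vzero.

Definition limsup_pos (a : nat -> R) : Prop :=
  exists eps, 0 < eps /\ forall N, exists n, (N <= n)%nat /\ eps <= a n.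

(* Main.v *)
Require Import Defs.
From Stdlib Require Import Reals ZArith List Lia Lra Psatz.
From Stdlib Require Import Classical ClassicalEpsilon FunctionalExtensionality.
Open Scope R_scope.

Definition Csub (a b : Cx) := Cadd a (Copp b).

Lemma Cx_eq : forall a b : Cx, re a = re b -> im a = im b -> a = b.
Proof. intros [] [] H1 H2; simpl in *; subst; reflexivity. Qed.

Lemma Cring : ring_theory Czero Cone Cadd Cmul Csub Copp (@eq Cx).
Proof.
  constructor; intros; apply Cx_eq; destruct x; try destruct y; try destruct z;
  unfold Csub; simpl; ring.
Qed.
Add Ring Cxring : Cring.

Definition Cinv (a : Cx) : Cx :=
  mkC (re a / (re a ^ 2 + im a ^ 2)) (- im a / (re a ^ 2 + im a ^ 2)).

Lemma Cinv_r : forall a, a <> Czero -> Cmul a (Cinv a) = Cone.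
Proof.
  intros [x y] H. assert (Hn : x ^ 2 + y ^ 2 <> 0).
  { intro E. apply H. assert (x = 0) by nra. assert (y = 0) by nra. subst. reflexivity. }
  apply Cx_eq; unfold Cinv, Cmul; simpl.
  - field. intro E; apply Hn; nra.
  - field. intro E; apply Hn; nra.
Qed.

Lemma Cnorm2_ge0 : forall a, 0 <= Cnorm2 a.
Proof. intros [x y]; unfold Cnorm2; simpl; nra. Qed.

Lemma Cnorm2_mul : forall a b, Cnorm2 (Cmul a b) = Cnorm2 a * Cnorm2 b.
Proof. intros [x y] [u v]; unfold Cnorm2; simpl; ring. Qed.

Lemma Cnorm2_pos : forall a, a <> Czero -> 0 < Cnorm2 a.
Proof.
  intros [x y] H; unfold Cnorm2; simpl.
  destruct (Req_dec x 0); destruct (Req_dec y 0); subst; try nra.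
  exfalso; apply H; reflexivity.
Qed.

Lemma csum_ext : forall n f g, (forall j, (j < n)%nat -> f j = g j) -> csum n f = csum n g.
Proof. induction n; intros; simpl; auto. rewrite IHn with (g := g) by auto. rewrite H by lia. auto. Qed.

Lemma csum_add : forall n f g, csum n (fun j => Cadd (f j) (g j)) = Cadd (csum n f) (csum n g).
Proof. induction n; intros; simpl. ring. rewrite IHn. ring. Qed.

Lemma csum_scal : forall n c f, Cmul c (csum n f) = csum n (fun j => Cmul c (f j)).
Proof. induction n; intros; simpl. ring. rewrite <- IHn. ring. Qed.

Lemma csum_opp : forall n f, Copp (csum n f) = csum n (fun j => Copp (f j)).
Proof. induction n; intros; simpl. ring. rewrite <- IHn. ring. Qed.

Lemma csum_zero : forall n f, (forall j, (j < n)%nat -> f j = Czero) -> csum n f = Czero.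
Proof. induction n; intros; simpl; auto. rewrite IHn by auto. rewrite H by lia. ring. Qed.

Lemma csum_swap : forall n m (F : nat -> nat -> Cx),
  csum n (fun i => csum m (fun j => F i j)) = csum m (fun j => csum n (fun i => F i j)).
Proof.
  induction n; intros; simpl.
  - symmetry; apply csum_zero; auto.
  - rewrite IHn. rewrite <- csum_add. reflexivity.
Qed.

Lemma csum_app : forall a b F, csum (a + b) F = Cadd (csum a F) (csum b (fun j => F (a + j)%nat)).
Proof.
  intros a b; induction b; intros; simpl.
  - rewrite Nat.add_0_r. ring.
  - rewrite Nat.add_succ_r. simpl. rewrite IHb. ring.
Qed.

Lemma csum_split : forall q k F,
  csum (q * k) F = csum q (fun a => csum k (fun b => F (a * k + b)%nat)).
Proof.
  induction q; intros; simpl. reflexivity.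
  rewrite Nat.add_comm, csum_app, IHq. reflexivity.
Qed.

Lemma csum_delta : forall n i (v : nat -> Cx), (i < n)%nat ->
  csum n (fun j => Cmul (mId i j) (v j)) = v i.
Proof.
  induction n; intros; simpl. lia.
  unfold mId at 2. destruct (Nat.eqb_spec i n).
  - subst. rewrite csum_zero. ring. intros j Hj. unfold mId.
    destruct (Nat.eqb_spec n j). lia. ring.
  - rewrite IHn by lia. ring.
Qed.

Lemma csum_last : forall n f, csum (Datatypes.S n) f = Cadd (csum n f) (f n).
Proof. reflexivity. Qed.

Lemma rsum_ge0 : forall n f, (forall j, (j < n)%nat -> 0 <= f j) -> 0 <= rsum n f.
Proof. induction n; intros; simpl. lra. specialize (IHn f). assert (0 <= f n) by (apply H; lia).
  assert (0 <= rsum n f) by (apply IHn; intros; apply H; lia). lra. Qed.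

Lemma rsum_term : forall n f i, (forall j, (j < n)%nat -> 0 <= f j) -> (i < n)%nat -> f i <= rsum n f.
Proof. induction n; intros; simpl. lia.
  assert (0 <= rsum n f) by (apply rsum_ge0; intros; apply H; lia).
  destruct (Nat.eq_dec i n). subst. lra.
  assert (f i <= rsum n f) by (apply IHn; intros; try apply H; lia). assert (0 <= f n) by (apply H; lia). lra. Qed.

Lemma rsum_le : forall n f g, (forall j, (j < n)%nat -> f j <= g j) -> rsum n f <= rsum n g.
Proof. induction n; intros; simpl. lra. assert (f n <= g n) by (apply H; lia).
  assert (rsum n f <= rsum n g) by (apply IHn; intros; apply H; lia). lra. Qed.

Lemma rsum_scal : forall n c f, rsum n (fun j => c * f j) = c * rsum n f.
Proof. induction n; intros; simpl. ring. rewrite IHn. ring. Qed.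

Fixpoint rsumre (n : nat) (f : nat -> Cx) : R := match n with O => 0 | Datatypes.S m => rsumre m f + re (f m) end.

Lemma re_csum : forall n f, re (csum n f) = rsum n (fun j => re (f j)).
Proof. induction n; intros; simpl; auto. rewrite IHn; auto. Qed.
Lemma im_csum : forall n f, im (csum n f) = rsum n (fun j => im (f j)).
Proof. induction n; intros; simpl; auto. rewrite IHn; auto. Qed.

Lemma rsum_sq : forall n f, (rsum n f) ^ 2 <= INR n * rsum n (fun j => f j ^ 2).
Proof.
  induction n; intros. simpl. lra.
  change (rsum (Datatypes.S n) f) with (rsum n f + f n).
  change (rsum (Datatypes.S n) (fun j => f j ^ 2)) with (rsum n (fun j => f j ^ 2) + f n ^ 2).
  rewrite S_INR.
  specialize (IHn f). set (s := rsum n f) in *. set (q := rsum n (fun j => f j ^ 2)) in *.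
  set (v := f n) in *.
  destruct (Nat.eq_dec n 0).
  - subst n. unfold s, q; simpl. nra.
  - set (N := INR n) in *.
    assert (HN : 0 < N) by (unfold N; apply lt_0_INR; lia).
    assert (H2: N * (s + v) ^ 2 <= N * ((N + 1) * (q + v ^ 2))).
    { pose proof (pow2_ge_0 (s - N * v)). assert (N * s ^ 2 <= N * (N * q)) by (apply Rmult_le_compat_l; lra). nra. }
    apply Rmult_le_reg_l in H2; auto.
Qed.

Lemma rsum_add : forall n f g, rsum n (fun j => f j + g j) = rsum n f + rsum n g.
Proof. induction n; intros; simpl. ring. rewrite IHn. ring. Qed.

Lemma Cnorm2_csum : forall n f, Cnorm2 (csum n f) <= INR n * rsum n (fun j => Cnorm2 (f j)).
Proof.
  intros.
  pose proof (rsum_sq n (fun j => re (f j))). pose proof (rsum_sq n (fun j => im (f j))).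
  replace (rsum n (fun j => Cnorm2 (f j))) with
     (rsum n (fun j => re (f j) ^ 2) + rsum n (fun j => im (f j) ^ 2)).
  2:{ rewrite <- rsum_add. reflexivity. }
  unfold Cnorm2 at 1. rewrite re_csum, im_csum. lra.
Qed.

Lemma LA : forall m n (A : nat -> nat -> Cx), (n < m)%nat ->
  exists c : nat -> Cx, (exists j, (j < m)%nat /\ c j <> Czero) /\
    forall i, (i < n)%nat -> csum m (fun j => Cmul (A i j) (c j)) = Czero.
Proof.
  induction m as [|m IH]; intros n A Hnm. lia.
  destruct (classic (exists i0, (i0 < n)%nat /\ A i0 m <> Czero)) as [[i0 [Hi0 Hnz]]|Hall].
  - set (sg := fun r => if Nat.ltb r i0 then r else Datatypes.S r).
    set (iv := Cinv (A i0 m)).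
    set (A' := fun r j => Csub (A (sg r) j) (Cmul (Cmul (A (sg r) m) iv) (A i0 j))).
    destruct (IH (n - 1)%nat A') as [c' [[j0 [Hj0 Hc0]] Hsol]]. lia.
    set (S0 := csum m (fun j => Cmul (A i0 j) (c' j))).
    set (g := Copp (Cmul iv S0)).
    exists (fun j => if Nat.eqb j m then g else c' j). split.
    + exists j0. split. lia. destruct (Nat.eqb_spec j0 m). lia. auto.
    + intros i Hi. rewrite csum_last. rewrite Nat.eqb_refl.
      rewrite (csum_ext m _ (fun j => Cmul (A i j) (c' j))).
      2:{ intros j Hj. destruct (Nat.eqb_spec j m). lia. auto. }
      assert (Hinv : Cmul (A i0 m) iv = Cone) by (apply Cinv_r; auto).
      destruct (Nat.eq_dec i i0).
      * subst i. fold S0. unfold g.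
        transitivity (Cmul S0 (Csub Cone (Cmul (A i0 m) iv))). ring.
        rewrite Hinv. ring.
      * assert (exists r, (r < n - 1)%nat /\ sg r = i) as [r [Hr Hsr]].
        { destruct (Nat.ltb_spec i i0).
          - exists i. unfold sg. destruct (Nat.ltb_spec i i0); split; lia.
          - exists (i - 1)%nat. unfold sg. destruct (Nat.ltb_spec (i-1) i0); split; lia. }
        specialize (Hsol r Hr). unfold A' in Hsol. rewrite Hsr in Hsol.
        assert (E : csum m (fun j => Cmul (A i j) (c' j)) =
                   Cmul (Cmul (A i m) iv) S0).
        { unfold S0. rewrite csum_scal.
          transitivity (Cadd (csum m (fun j : nat => Cmul (Csub (A i j) (Cmul (Cmul (A i m) iv) (A i0 j))) (c' j)))
                             (csum m (fun j => Cmul (Cmul (A i m) iv) (Cmul (A i0 j) (c' j))))).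
          rewrite <- csum_add. apply csum_ext. intros; ring.
          rewrite Hsol. ring. }
        rewrite E. unfold g. ring.
  - exists (fun j => if Nat.eqb j m then Cone else Czero). split.
    + exists m. split. lia. rewrite Nat.eqb_refl. intro H. inversion H. lra.
    + intros i Hi. rewrite csum_last, Nat.eqb_refl, csum_zero.
      * assert (A i m = Czero). { apply NNPP. intro H. apply Hall. eauto. }
        rewrite H. ring.
      * intros j Hj. destruct (Nat.eqb_spec j m). lia. ring.
Qed.

Definition csumL {X : Type} (L : list X) (g : X -> Cx) : Cx :=
  fold_right (fun a acc => Cadd (g a) acc) Czero L.

Lemma lvsum_eval : forall {X} (L : list X) F i, lvsum L F i = csumL L (fun a => F a i).
Proof. induction L; intros; simpl; auto. unfold vadd. rewrite IHL. auto. Qed.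

Lemma lsum_eval : forall {X} (L : list X) F i j, lsum L F i j = csumL L (fun a => F a i j).
Proof. induction L; intros; simpl; auto. unfold madd. rewrite IHL. auto. Qed.

Lemma csumL_ext : forall {X} (L : list X) f g, (forall a, In a L -> f a = g a) -> csumL L f = csumL L g.
Proof. induction L; intros; simpl; auto. rewrite H by (left; auto). rewrite (IHL f g); auto.
  intros; apply H; right; auto. Qed.

Lemma csumL_scal : forall {X} (L : list X) c f, Cmul c (csumL L f) = csumL L (fun a => Cmul c (f a)).
Proof. induction L; intros; simpl. ring. rewrite <- IHL. ring. Qed.

Lemma csumL_add : forall {X} (L : list X) f g, csumL L (fun a => Cadd (f a) (g a)) = Cadd (csumL L f) (csumL L g).
Proof. induction L; intros; simpl. ring. rewrite IHL. ring. Qed.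

Lemma csumL_zero : forall {X} (L : list X) f, (forall a, In a L -> f a = Czero) -> csumL L f = Czero.
Proof. induction L; intros; simpl; auto. rewrite H by (left; auto). rewrite IHL. ring.
  intros; apply H; right; auto. Qed.

Lemma csumL_csum : forall {X} (L : list X) m (F : X -> nat -> Cx),
  csumL L (fun a => csum m (F a)) = csum m (fun l => csumL L (fun a => F a l)).
Proof. induction L; intros; simpl. symmetry; apply csum_zero; auto.
  rewrite IHL. rewrite <- csum_add. reflexivity. Qed.

Lemma csumL_single : forall {X} (L : list X) f a, NoDup L -> In a L ->
  (forall b, In b L -> b <> a -> f b = Czero) -> csumL L f = f a.
Proof.
  induction L as [|x L IH]; intros f a Hnd Hin Hz; simpl. destruct Hin.
  inversion Hnd; subst. destruct Hin as [<-|Hin].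
  - rewrite csumL_zero. ring. intros b Hb. apply Hz. right; auto. intro; subst; auto.
  - rewrite (IH f a); auto. rewrite Hz. ring. left; auto. intro; subst; auto.
    intros b Hb Hne. apply Hz; auto. right; auto.
Qed.

Lemma mvmul_ext_v : forall D A u v i, (forall j, (j < D)%nat -> u j = v j) -> mvmul D A u i = mvmul D A v i.
Proof. intros. unfold mvmul. apply csum_ext. intros. rewrite H; auto. Qed.

Lemma mvmul_ext_m : forall D A B v i, (forall j, (j < D)%nat -> A i j = B i j) -> mvmul D A v i = mvmul D B v i.
Proof. intros. unfold mvmul. apply csum_ext. intros. rewrite H; auto. Qed.

Lemma mvmul_assoc : forall D A B v i, mvmul D A (mvmul D B v) i = mvmul D (mmul D A B) v i.
Proof.
  intros. unfold mvmul, mmul.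
  transitivity (csum D (fun j => csum D (fun k => Cmul (A i j) (Cmul (B j k) (v k))))).
  apply csum_ext; intros. apply csum_scal.
  rewrite csum_swap. apply csum_ext; intros. symmetry.
  transitivity (Cmul (v j) (csum D (fun j0 => Cmul (A i j0) (B j0 j)))). ring.
  rewrite csum_scal. apply csum_ext; intros; ring.
Qed.

Lemma mvmul_id : forall D v i, (i < D)%nat -> mvmul D mId v i = v i.
Proof. intros. unfold mvmul. apply csum_delta; auto. Qed.

Lemma mvmul_zero : forall D A i, mvmul D A vzero i = Czero.
Proof. intros. unfold mvmul. apply csum_zero. intros. unfold vzero. ring. Qed.

Lemma mvmul_comb : forall D A m c (F : nat -> cvec) i,
  mvmul D A (fun k => csum m (fun l => Cmul (c l) (F l k))) i =
  csum m (fun l => Cmul (c l) (mvmul D A (F l) i)).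
Proof.
  intros. unfold mvmul.
  transitivity (csum D (fun j => csum m (fun l => Cmul (c l) (Cmul (A i j) (F l j))))).
  apply csum_ext; intros. rewrite csum_scal. apply csum_ext; intros; ring.
  rewrite csum_swap. apply csum_ext; intros. rewrite csum_scal. reflexivity.
Qed.

Lemma mvmul_add : forall D A u v i, mvmul D A (vadd u v) i = Cadd (mvmul D A u i) (mvmul D A v i).
Proof. intros. unfold mvmul, vadd. rewrite <- csum_add. apply csum_ext; intros; ring. Qed.

Lemma mvmul_scal : forall D A c u i, mvmul D A (vscal c u) i = Cmul c (mvmul D A u i).
Proof. intros. unfold mvmul, vscal. rewrite csum_scal. apply csum_ext; intros; ring. Qed.

Lemma mvmul_lsum : forall {X} D (L : list X) F v i,
  mvmul D (lsum L F) v i = csumL L (fun a => mvmul D (F a) v i).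
Proof.
  intros. unfold mvmul.
  transitivity (csum D (fun j => csumL L (fun a => Cmul (F a i j) (v j)))).
  apply csum_ext; intros. rewrite lsum_eval.
  transitivity (Cmul (v j) (csumL L (fun a => F a i j))). ring.
  rewrite csumL_scal. apply csumL_ext; intros; ring.
  rewrite <- csumL_csum. reflexivity.
Qed.

Lemma mvmul_lvsum : forall {X} D A (L : list X) F i,
  mvmul D A (lvsum L F) i = csumL L (fun a => mvmul D A (F a) i).
Proof.
  intros. unfold mvmul.
  transitivity (csum D (fun j => csumL L (fun a => Cmul (A i j) (F a j)))).
  apply csum_ext; intros. rewrite lvsum_eval, csumL_scal. reflexivity.
  rewrite <- csumL_csum. reflexivity.
Qed.

Lemma mmul_ext : forall D A A' B B', mat_eq D A A' -> mat_eq D B B' -> mat_eq D (mmul D A B) (mmul D A' B').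
Proof. intros D A A' B B' HA HB i j Hi Hj. unfold mmul. apply csum_ext; intros.
  rewrite HA, HB; auto. Qed.

Definition fcomb (m : nat) (c : nat -> Cx) (F : nat -> field) : field :=
  fun x i => csum m (fun l => Cmul (c l) (F l x i)).
Definition tr (a : pt) (g : field) : field := fun x => g (zsub x a).

Section Ops.
Variables (D : nat) (L : list pt) (P : pt -> cmat) (C : cmat).

Lemma Shift_comb : forall m c F, Shift D L P (fcomb m c F) = fcomb m c (fun l => Shift D L P (F l)).
Proof.
  intros. apply functional_extensionality; intro x. apply functional_extensionality; intro i.
  unfold Shift, fcomb. rewrite lvsum_eval.
  transitivity (csumL L (fun a => csum m (fun l => Cmul (c l) (mvmul D (P a) (F l (zsub x a)) i)))).
  apply csumL_ext; intros. apply mvmul_comb.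
  rewrite csumL_csum. apply csum_ext; intros. rewrite lvsum_eval, csumL_scal. reflexivity.
Qed.

Lemma ShiftAdj_comb : forall m c F, ShiftAdj D L P (fcomb m c F) = fcomb m c (fun l => ShiftAdj D L P (F l)).
Proof.
  intros. apply functional_extensionality; intro x. apply functional_extensionality; intro i.
  unfold ShiftAdj, fcomb. rewrite lvsum_eval.
  transitivity (csumL L (fun a => csum m (fun l => Cmul (c l) (mvmul D (madj (P a)) (F l (zadd x a)) i)))).
  apply csumL_ext; intros. apply mvmul_comb.
  rewrite csumL_csum. apply csum_ext; intros. rewrite lvsum_eval, csumL_scal. reflexivity.
Qed.

Lemma Coin_comb : forall m c F, Coin D C (fcomb m c F) = fcomb m c (fun l => Coin D C (F l)).
Proof.
  intros. apply functional_extensionality; intro x. apply functional_extensionality; intro i.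
  unfold Coin, fcomb. apply mvmul_comb.
Qed.

Lemma UC_comb : forall m c F, UC D L P C (fcomb m c F) = fcomb m c (fun l => UC D L P C (F l)).
Proof. intros. unfold UC. rewrite Coin_comb, Shift_comb, Coin_comb, ShiftAdj_comb. reflexivity. Qed.

Lemma iter_comb : forall n m c F, Nat.iter n (UC D L P C) (fcomb m c F) =
   fcomb m c (fun l => Nat.iter n (UC D L P C) (F l)).
Proof. induction n; intros; simpl; auto. rewrite IHn, UC_comb. reflexivity. Qed.

Lemma zsub_comm : forall x a b, zsub (zsub x a) b = zsub (zsub x b) a.
Proof. intros. apply functional_extensionality; intro k. unfold zsub. lia. Qed.
Lemma zadd_zsub : forall x a b, zadd (zsub x a) b = zsub (zadd x b) a.
Proof. intros. apply functional_extensionality; intro k. unfold zsub, zadd. lia. Qed.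

Lemma UC_tr : forall a g, UC D L P C (tr a g) = tr a (UC D L P C g).
Proof.
  intros. unfold UC, ShiftAdj, Coin, Shift, tr.
  apply functional_extensionality; intro x. f_equal.
  apply functional_extensionality; intro b. f_equal. f_equal.
  apply functional_extensionality; intro k. f_equal. f_equal.
  apply functional_extensionality; intro b'. f_equal. f_equal.
  rewrite zadd_zsub, zsub_comm. reflexivity.
Qed.

Lemma iter_tr : forall n a g, Nat.iter n (UC D L P C) (tr a g) = tr a (Nat.iter n (UC D L P C) g).
Proof. induction n; intros; simpl; auto. rewrite IHn, UC_tr. reflexivity. Qed.

Lemma Zpt_zsub : forall d x a, Zpt d x -> Zpt d a -> Zpt d (zsub x a).
Proof. unfold Zpt, zsub; intros. rewrite H, H0 by auto. reflexivity. Qed.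
Lemma Zpt_zadd : forall d x a, Zpt d x -> Zpt d a -> Zpt d (zadd x a).
Proof. unfold Zpt, zadd; intros. rewrite H, H0 by auto. reflexivity. Qed.

Lemma UC_feq : forall d g h, Forall (Zpt d) L -> feq d D g h -> feq d D (UC D L P C g) (UC D L P C h).
Proof.
  intros d g h HL Hgh x Hx i Hi. unfold UC, ShiftAdj, Coin, Shift.
  rewrite !lvsum_eval. apply csumL_ext. intros a Ha.
  assert (Za : Zpt d a) by (rewrite Forall_forall in HL; auto).
  apply mvmul_ext_v. intros j Hj.
  apply mvmul_ext_v. intros j' Hj'.
  rewrite !lvsum_eval. apply csumL_ext. intros b Hb.
  assert (Zb : Zpt d b) by (rewrite Forall_forall in HL; auto).
  apply mvmul_ext_v. intros k Hk. apply mvmul_ext_v. intros k' Hk'.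
  apply Hgh; auto. apply Zpt_zsub; auto. apply Zpt_zadd; auto.
Qed.

Lemma iter_feq : forall d n g h, Forall (Zpt d) L -> feq d D g h ->
  feq d D (Nat.iter n (UC D L P C) g) (Nat.iter n (UC D L P C) h).
Proof. induction n; intros; simpl; auto. apply UC_feq; auto. Qed.

End Ops.

Lemma collect_N : forall m (Q : nat -> nat -> Prop),
  (forall l, (l < m)%nat -> exists N, forall n, (N <= n)%nat -> Q l n) ->
  exists N, forall l n, (l < m)%nat -> (N <= n)%nat -> Q l n.
Proof.
  induction m; intros. exists O; intros; lia.
  destruct (IHm Q) as [N1 H1]. intros; apply H; lia.
  destruct (H m) as [N2 H2]. lia.
  exists (Nat.max N1 N2). intros l n Hl Hn. destruct (Nat.eq_dec l m).
  subst; apply H2; lia. apply H1; lia.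
Qed.

Lemma part2 : forall d D L P C m c (x : nat -> pt) (w : nat -> cvec) y0 i0,
  Forall (Zpt d) L ->
  (forall l, (l < m)%nat -> Zpt d (x l)) ->
  let f := fcomb m c (fun l => tr (x l) (delta0 d (w l))) in
  feq d D (UC D L P C f) f ->
  Zpt d y0 -> (i0 < D)%nat -> f y0 i0 <> Czero ->
  exists l, (l < m)%nat /\
   ~ (forall eps, 0 < eps -> exists N, forall n, (N <= n)%nat ->
        vnorm2 D (Nat.iter n (UC D L P C) (delta0 d (w l)) (zsub y0 (x l))) < eps).
Proof.
  intros d D L P C m c x w y0 i0 HL Hx f Hf Hy0 Hi0 Hz.
  apply NNPP. intro Hcon.
  set (z := f y0 i0) in *.
  set (M := rsum m (fun l => Cnorm2 (c l))).
  assert (HM : 0 <= M) by (apply rsum_ge0; intros; apply Cnorm2_ge0).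
  assert (Hm : (0 < m)%nat).
  { destruct m. exfalso. apply Hz. reflexivity. lia. }
  assert (Hmr : 0 < INR m) by (apply lt_0_INR; auto).
  assert (Hzp : 0 < Cnorm2 z) by (apply Cnorm2_pos; auto).
  set (eps := Cnorm2 z / (INR m * (M + 1))).
  assert (Heps : 0 < eps). { unfold eps. apply Rdiv_lt_0_compat; auto. nra. }
  destruct (collect_N m (fun l n => vnorm2 D (Nat.iter n (UC D L P C) (delta0 d (w l)) (zsub y0 (x l))) < eps))
    as [N HN].
  { intros l Hl. apply NNPP. intro H. apply Hcon. exists l. split; [auto|]. intro H'.
    apply H. apply H'; auto. }
  assert (Hit : feq d D (Nat.iter N (UC D L P C) f) f).
  { clear -Hf HL. induction N. intros y Hy i Hi; reflexivity.
    intros y Hy i Hi. simpl. rewrite (UC_feq D L P C d _ f HL IHN y Hy i Hi). apply Hf; auto.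
    all: idtac. }
  assert (Ez : z = csum m (fun l => Cmul (c l) (Nat.iter N (UC D L P C) (delta0 d (w l)) (zsub y0 (x l)) i0))).
  { unfold z. rewrite <- (Hit y0 Hy0 i0 Hi0). unfold f. rewrite iter_comb. unfold fcomb.
    apply csum_ext; intros. rewrite iter_tr. reflexivity. }
  pose proof (Cnorm2_csum m (fun l => Cmul (c l) (Nat.iter N (UC D L P C) (delta0 d (w l)) (zsub y0 (x l)) i0))) as Hcs.
  rewrite <- Ez in Hcs.
  assert (Hb : rsum m (fun l => Cnorm2 (Cmul (c l) (Nat.iter N (UC D L P C) (delta0 d (w l)) (zsub y0 (x l)) i0)))
               <= M * eps).
  { unfold M. rewrite Rmult_comm, <- rsum_scal. apply rsum_le. intros l Hl.
    rewrite Cnorm2_mul. rewrite (Rmult_comm eps). apply Rmult_le_compat_l. apply Cnorm2_ge0.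
    apply Rlt_le. 
    apply Rle_lt_trans with (vnorm2 D (Nat.iter N (UC D L P C) (delta0 d (w l)) (zsub y0 (x l)))).
    2: apply (HN l N); auto.
    unfold vnorm2. apply (rsum_term D (fun i => Cnorm2 (Nat.iter N (UC D L P C) (delta0 d (w l)) (zsub y0 (x l)) i))); auto.
    intros; apply Cnorm2_ge0. }
  assert (Cnorm2 z <= INR m * (M * eps)).
  { eapply Rle_trans. apply Hcs. apply Rmult_le_compat_l; lra. }
  assert (INR m * (M * eps) = Cnorm2 z * (M / (M + 1))).
  { unfold eps. field. split; lra. }
  assert (M / (M + 1) < 1). { apply (Rmult_lt_reg_r (M + 1)). lra. field_simplify; lra. }
  nra.
Qed.

Lemma mvmul_mzero_eq : forall D A v i, (forall j, (j < D)%nat -> A i j = Czero) -> mvmul D A v i = Czero.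
Proof. intros. unfold mvmul. apply csum_zero. intros. rewrite H by auto. ring. Qed.

Lemma SadjS : forall d D L P g x i, resolution_of_unity d D L P -> (i < D)%nat ->
  ShiftAdj D L P (Shift D L P g) x i = g x i.
Proof.
  intros d D L P g x i [Hnd [HZ [Hproj [Horth Hsum]]]] Hi.
  unfold ShiftAdj. rewrite lvsum_eval.
  transitivity (csumL L (fun a => mvmul D (P a) (g x) i)).
  - apply csumL_ext. intros a Ha. unfold Shift. rewrite mvmul_lvsum.
    rewrite (csumL_single L _ a Hnd Ha).
    + rewrite mvmul_assoc.
      replace (zsub (zadd x a) a) with x.
      2:{ apply functional_extensionality; intro k. unfold zsub, zadd. lia. }
      apply mvmul_ext_m. intros j Hj.
      destruct (Hproj a Ha) as [Hadj Hidem].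
      rewrite <- (Hidem i j Hi Hj). apply (mmul_ext D _ _ _ _ Hadj (fun _ _ _ _ => eq_refl)); auto.
    + intros b Hb Hne. rewrite mvmul_assoc. apply mvmul_mzero_eq. intros j Hj.
      destruct (Hproj a Ha) as [Hadj Hidem].
      rewrite (mmul_ext D _ (P a) _ (P b) Hadj (fun _ _ _ _ => eq_refl)); auto.
      apply (Horth a b Ha Hb). auto. auto. auto.
  - rewrite <- mvmul_lsum. rewrite (mvmul_ext_m D _ mId). apply mvmul_id; auto.
    intros j Hj. apply Hsum; auto.
Qed.

Definition upd (x : pt) (k : nat) (v : Z) : pt := fun j => if Nat.eqb j k then v else x j.

Fixpoint box (d : nat) (lo : Z) (len : nat) : list pt :=
  match d with
  | O => (fun _ => 0%Z) :: nil
  | Datatypes.S d' => flat_map (fun t => map (fun x => upd x d' (lo + Z.of_nat t)%Z) (box d' lo len)) (seq 0 len)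
  end.

Lemma In_box : forall d lo len x, In x (box d lo len) <->
  Zpt d x /\ forall k, (k < d)%nat -> (lo <= x k < lo + Z.of_nat len)%Z.
Proof.
  induction d; intros; simpl.
  - split.
    + intros [<-|[]]. split. intros k _; reflexivity. intros; lia.
    + intros [HZ _]. left. apply functional_extensionality; intro k. symmetry; apply HZ; lia.
  - rewrite in_flat_map. split.
    + intros [t [Ht Hx]]. apply in_seq in Ht. apply in_map_iff in Hx. destruct Hx as [x' [<- Hx']].
      apply IHd in Hx'. destruct Hx' as [HZ Hc]. split.
      * intros k Hk. unfold upd. destruct (Nat.eqb_spec k d). lia. apply HZ. lia.
      * intros k Hk. unfold upd. destruct (Nat.eqb_spec k d). lia. apply Hc. lia.
    + intros [HZ Hc]. exists (Z.to_nat (x d - lo)). split.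
      * apply in_seq. specialize (Hc d ltac:(lia)). lia.
      * apply in_map_iff. exists (upd x d 0%Z). split.
        -- apply functional_extensionality; intro k. unfold upd.
           destruct (Nat.eqb_spec k d). subst. specialize (Hc d ltac:(lia)). lia. auto.
        -- apply IHd. split.
           ++ intros k Hk. unfold upd. destruct (Nat.eqb_spec k d). auto. apply HZ. lia.
           ++ intros k Hk. unfold upd. destruct (Nat.eqb_spec k d). lia. apply Hc. lia.
Qed.

Lemma length_flat_map_const : forall {X Y} (f : X -> list Y) l n,
  (forall t, length (f t) = n) -> length (flat_map f l) = (length l * n)%nat.
Proof. induction l; intros; simpl; auto. rewrite length_app, H, (IHl n); auto. Qed.

Lemma length_box : forall d lo len, length (box d lo len) = (len ^ d)%nat.
Proof.
  induction d; intros; simpl; auto.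
  rewrite (length_flat_map_const _ _ (len ^ d)%nat). rewrite length_seq. lia.
  intros. rewrite length_map. auto.
Qed.

Lemma NoDup_map_on : forall {X Y} (g : X -> Y) l, NoDup l ->
  (forall a b, In a l -> In b l -> g a = g b -> a = b) -> NoDup (map g l).
Proof.
  induction l; intros; simpl. constructor. inversion H; subst. constructor.
  - intro Hin. apply in_map_iff in Hin. destruct Hin as [b [Hb Hbin]].
    assert (b = a) by (apply H0; simpl; auto). subst. auto.
  - apply IHl; auto. intros; apply H0; simpl; auto.
Qed.

Lemma NoDup_flat_map' : forall {X Y} (f : X -> list Y) l, NoDup l ->
  (forall t, In t l -> NoDup (f t)) ->
  (forall t t' y, In t l -> In t' l -> In y (f t) -> In y (f t') -> t = t') ->
  NoDup (flat_map f l).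
Proof.
  induction l; intros; simpl. constructor. inversion H; subst.
  apply NoDup_app. apply H0; simpl; auto.
  apply IHl; auto. intros; apply H0; simpl; auto. intros; eapply H1; simpl; eauto.
  intros y Hy Hy'. apply in_flat_map in Hy'. destruct Hy' as [t [Ht Hyt]].
  assert (a = t) by (eapply H1; simpl; eauto). subst. auto.
Qed.

Lemma NoDup_box : forall d lo len, NoDup (box d lo len).
Proof.
  induction d; intros; simpl. constructor. intros []. constructor.
  apply NoDup_flat_map'. apply seq_NoDup.
  - intros t _. apply NoDup_map_on; auto. intros a b Ha Hb Hab.
    apply In_box in Ha. apply In_box in Hb. apply functional_extensionality; intro k.
    destruct (Nat.eq_dec k d). subst. rewrite (proj1 Ha), (proj1 Hb); auto.
    apply (f_equal (fun z => z k)) in Hab. unfold upd in Hab.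
    destruct (Nat.eqb_spec k d); auto. lia.
  - intros t t' y _ _ H1 H2. apply in_map_iff in H1, H2.
    destruct H1 as [a [Ha _]]. destruct H2 as [b [Hb _]].
    rewrite <- Hb in Ha. apply (f_equal (fun z => z d)) in Ha. unfold upd in Ha.
    rewrite Nat.eqb_refl in Ha. lia.
Qed.

Lemma coord_bound : forall d (L : list pt), exists a : nat,
  forall s, In s L -> forall k, (k < d)%nat -> (Z.abs (s k) <= Z.of_nat a)%Z.
Proof.
  intros d L. induction L as [|s L IH].
  - exists O. intros s [].
  - destruct IH as [a Ha].
    assert (exists b : nat, forall k, (k < d)%nat -> (Z.abs (s k) <= Z.of_nat b)%Z) as [b Hb].
    { clear. induction d. exists O; intros; lia.
      destruct IHd as [b Hb]. exists (Nat.max b (Z.to_nat (Z.abs (s d)))). intros k Hk.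
      destruct (Nat.eq_dec k d). subst. lia. specialize (Hb k ltac:(lia)). lia. }
    exists (Nat.max a b). intros s' [<-|Hs'] k Hk.
    + specialize (Hb k Hk). lia.
    + specialize (Ha s' Hs' k Hk). lia.
Qed.

Lemma bern : forall d x A : nat, ((x + A) ^ d <= x ^ d + d * A * (x + A) ^ (d - 1))%nat.
Proof.
  induction d; intros; simpl. lia.
  rewrite Nat.sub_0_r. specialize (IHd x A).
  assert (x ^ d <= (x + A) ^ d)%nat by (apply Nat.pow_le_mono_l; lia).
  destruct d.
  - simpl. lia.
  - replace (Datatypes.S d - 1)%nat with d in IHd by lia.
    assert ((x + A) ^ Datatypes.S d = (x + A) * (x + A) ^ d)%nat by reflexivity.
    nia.
Qed.

Lemma count_ineq : forall d r k A : nat, (r < k)%nat ->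
  exists N : nat, (1 <= N)%nat /\ (r * (N + A) ^ d < k * N ^ d)%nat.
Proof.
  intros d r k A Hrk. exists (Datatypes.S ((r + 1) * d * A)). split. lia.
  set (N := Datatypes.S ((r + 1) * d * A)).
  destruct d.
  - simpl. lia.
  - pose proof (bern (Datatypes.S d) N A).
    replace (Datatypes.S d - 1)%nat with d in H by lia.
    assert ((N + A) ^ Datatypes.S d = (N + A) * (N + A) ^ d)%nat by reflexivity.
    assert (0 < (N + A) ^ d)%nat by (apply Nat.neq_0_lt_0, Nat.pow_nonzero; lia).
    assert ((r + 1) * (Datatypes.S d) * A < N + A)%nat by (unfold N; lia).
    assert ((r+1) * (Datatypes.S d * A * (N + A) ^ d) < (N + A) ^ Datatypes.S d)%nat.
    { rewrite H0. replace ((r+1) * (Datatypes.S d * A * (N + A) ^ d))%nat with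
        (((r + 1) * Datatypes.S d * A) * (N + A) ^ d)%nat by ring.
      apply Nat.mul_lt_mono_pos_r; auto. }
    assert (r * (N + A) ^ Datatypes.S d < (r + 1) * N ^ Datatypes.S d)%nat by nia.
    nia.
Qed.

Lemma nat_boundary : forall (Q : nat -> Prop) k, Q O -> ~ Q k ->
  exists r, (r < k)%nat /\ Q r /\ ~ Q (Datatypes.S r).
Proof.
  intros Q k H0 Hk. induction k. contradiction.
  destruct (classic (Q k)). exists k; split; auto.
  destruct (IHk H) as [r [? ?]]. exists r; split; auto.
Qed.

Lemma span_of : forall D (E : cvec -> Prop) k, ~ dim_ge D E k ->
  exists r (b : nat -> cvec), (r < k)%nat /\
    forall u, E u -> exists al : nat -> Cx, vec_eq D u (fun i => csum r (fun t => Cmul (al t) (b t i))).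
Proof.
  intros D E k Hk.
  destruct (nat_boundary (dim_ge D E) k) as [r [Hr [[b [HbE Hbi]] Hn]]]; auto.
  { exists (fun _ => vzero). split. intros; lia. intros c _ j Hj; lia. }
  exists r, b. split; auto. intros u Hu.
  set (b' := fun j => if Nat.eqb j r then u else b j).
  assert (Hnot : ~ lin_indep D (Datatypes.S r) b').
  { intro H. apply Hn. exists b'. split; auto. intros j Hj. unfold b'.
    destruct (Nat.eqb_spec j r); auto. apply HbE; lia. }
  unfold lin_indep in Hnot. apply not_all_ex_not in Hnot. destruct Hnot as [c Hc].
  apply imply_to_and in Hc. destruct Hc as [Hsum Hc].
  apply not_all_ex_not in Hc. destruct Hc as [j Hc]. apply imply_to_and in Hc. destruct Hc as [Hj Hcj].
  assert (Hsum' : forall i, (i < D)%nat ->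
     Cadd (csum r (fun t => Cmul (c t) (b t i))) (Cmul (c r) (u i)) = Czero).
  { intros i Hi. rewrite <- (Hsum i Hi). rewrite csum_last. unfold b'. rewrite Nat.eqb_refl.
    f_equal. apply csum_ext. intros t Ht. destruct (Nat.eqb_spec t r). lia. auto. }
  assert (Hcr : c r <> Czero).
  { intro E0. apply Hcj. destruct (Nat.eq_dec j r). subst; auto.
    apply (Hbi c); try lia. intros i Hi. rewrite <- (Hsum' i Hi). rewrite E0. ring. }
  exists (fun t => Cmul (Copp (Cinv (c r))) (c t)). intros i Hi.
  pose proof (Cinv_r _ Hcr) as Hinv.
  transitivity (Cmul (Copp (Cinv (c r))) (csum r (fun t => Cmul (c t) (b t i)))).
  - assert (E1 : csum r (fun t => Cmul (c t) (b t i)) = Copp (Cmul (c r) (u i))).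
    { pose proof (Hsum' i Hi) as H1.
      transitivity (Csub (Cadd (csum r (fun t => Cmul (c t) (b t i))) (Cmul (c r) (u i))) (Cmul (c r) (u i))).
      unfold Csub; ring. rewrite H1. unfold Csub; ring. }
    rewrite E1. transitivity (Cmul (u i) (Cmul (c r) (Cinv (c r)))). rewrite Hinv; ring. ring.
  - rewrite csum_scal. apply csum_ext; intros; ring.
Qed.

Lemma is_origin_iff : forall d z, is_origin d z = true <-> forall k, (k < d)%nat -> z k = 0%Z.
Proof.
  induction d; intros; simpl. split; intros; auto; lia.
  rewrite Bool.andb_true_iff, Z.eqb_eq, IHd. split.
  - intros [H1 H2] k Hk. destruct (Nat.eq_dec k d). subst; auto. apply H2; lia.
  - intros H. split. apply H; lia. intros; apply H; lia.
Qed.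

Lemma origin_eq : forall d y x, Zpt d y -> Zpt d x -> is_origin d (zsub y x) = true -> y = x.
Proof.
  intros d y x Hy Hx H. rewrite is_origin_iff in H. apply functional_extensionality; intro k.
  destruct (Nat.lt_ge_cases k d). specialize (H k H0). unfold zsub in H. lia.
  rewrite Hy, Hx; auto.
Qed.

Lemma origin_self : forall d x, is_origin d (zsub x x) = true.
Proof. intros. apply is_origin_iff. intros. unfold zsub. lia. Qed.

Lemma csum_single : forall n F q0, (q0 < n)%nat -> (forall q, (q < n)%nat -> q <> q0 -> F q = Czero) ->
  csum n F = F q0.
Proof.
  induction n; intros. lia. rewrite csum_last. destruct (Nat.eq_dec q0 n).
  - subst. rewrite csum_zero. ring. intros; apply H0; lia.
  - rewrite (IHn F q0) by (auto; lia). rewrite (H0 n) by lia. ring.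
Qed.

Definition rsumL {X} (L : list X) (g : X -> R) : R := fold_right (fun x acc => g x + acc) 0 L.

Lemma rsumL_app : forall {X} (L1 L2 : list X) g, rsumL (L1 ++ L2) g = rsumL L1 g + rsumL L2 g.
Proof. induction L1; intros; simpl. ring. rewrite IHL1. ring. Qed.

Lemma rsumL_ge0 : forall {X} (B : list X) g, (forall y, 0 <= g y) -> 0 <= rsumL B g.
Proof. induction B; intros; simpl. lra. pose proof (H a). assert (0 <= rsumL B g) by (apply IHB; auto). lra. Qed.

Lemma rsumL_bound : forall {X} (L' : list X) (B : list X) g, NoDup L' -> (forall y, 0 <= g y) ->
  (forall y, In y L' -> g y <> 0 -> In y B) -> rsumL L' g <= rsumL B g.
Proof.
  induction L' as [|a L' IH]; intros B g Hnd Hg Hs; simpl.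
  - apply rsumL_ge0; auto.
  - inversion Hnd; subst. destruct (Req_dec (g a) 0).
    + rewrite H. assert (rsumL L' g <= rsumL B g). apply IH; auto. intros; apply Hs; simpl; auto. lra.
    + assert (Ha : In a B) by (apply Hs; simpl; auto).
      destruct (in_split _ _ Ha) as [B1 [B2 ->]].
      assert (rsumL L' g <= rsumL (B1 ++ B2) g).
      { apply IH; auto. intros y Hy Hgy. assert (In y (B1 ++ a :: B2)) by (apply Hs; simpl; auto).
        apply in_app_or in H0. apply in_or_app. destruct H0 as [?|[?|?]]; auto. subst; contradiction. }
      rewrite rsumL_app in *. simpl. lra.
Qed.

Theorem theorem5p1 (d D : nat) (S : list pt) (P : pt -> cmat) (C : cmat) :
  resolution_of_unity d D S P ->
  unitary D C ->
  mat_eq D (mmul D C C) mId ->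
  ~ (exists c : Cx, mat_eq D C (mscal c mId)) ->
  dim_lt D (in_eigenspace D C Cone) (in_eigenspace D C (Copp Cone)) ->
  is_eigenvalue d D (UC D S P C) Cone /\
  exists (phi : cvec) (xo : pt),
    (exists i, (i < D)%nat /\ phi i <> Czero) /\ Zpt d xo /\
    limsup_pos (fun n => vnorm2 D (Nat.iter n (UC D S P C) (delta0 d phi) xo)).
Proof.
  intros Hres _ HCC _ [k [[w [Hw Hwi]] Hnk]].
  destruct (span_of D _ k Hnk) as [r [b [Hrk Hspan]]].
  pose (coef := fun u : cvec => epsilon (inhabits (fun _ : nat => Czero))
     (fun al => vec_eq D u (fun i => csum r (fun t => Cmul (al t) (b t i))))).
  assert (Hcoef : forall u, in_eigenspace D C Cone u ->
     vec_eq D u (fun i => csum r (fun t => Cmul (coef u t) (b t i)))).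
  { intros u Hu. unfold coef. apply epsilon_spec. apply Hspan; auto. }
  clear Hspan.
  assert (HZS : Forall (Zpt d) S) by apply Hres.
  destruct (coord_bound d S) as [a Ha].
  destruct (count_ineq d r k (2 * a) Hrk) as [N [HN1 HN]].
  set (Bx := box d (Z.of_nat a) N).
  set (By := box d 0 (N + 2 * a)).
  set (nB := (N ^ d)%nat). set (nB' := ((N + 2 * a) ^ d)%nat).
  set (m := (nB * k)%nat). set (p := (nB' * r)%nat).
  assert (Hpm : (p < m)%nat) by (unfold p, m, nB, nB'; lia).
  assert (Hk0 : (0 < k)%nat) by lia.
  set (x := fun l => nth (l / k) Bx (fun _ => 0%Z)).
  set (jj := fun l => (l mod k)%nat).
  set (F := fun l => tr (x l) (delta0 d (w (jj l)))).
  set (u := fun l y => vadd (Shift D S P (F l) y) (mvmul D C (Shift D S P (F l) y))).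
  set (Am := fun e l => coef (u l (nth (e / r) By (fun _ => 0%Z))) (e mod r)).
  destruct (LA m p Am Hpm) as [c [[l0 [Hl0 Hcl0]] Hsol]].
  set (f := fcomb m c F).
  assert (Hdm : forall q t, (t < r)%nat -> ((q * r + t) / r = q /\ (q * r + t) mod r = t)%nat).
  { intros q t Ht. split.
    - symmetry. apply (Nat.div_unique _ r q t); auto. lia.
    - symmetry. apply (Nat.mod_unique _ r q t); auto. lia. }
  assert (Hdk : forall q t, (t < k)%nat -> ((q * k + t) / k = q /\ (q * k + t) mod k = t)%nat).
  { intros q t Ht. split.
    - symmetry. apply (Nat.div_unique _ k q t); auto. lia.
    - symmetry. apply (Nat.mod_unique _ k q t); auto. lia. }
  assert (HlenB : length Bx = nB) by apply length_box.
  assert (HlenB' : length By = nB') by apply length_box.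
  assert (Hxin : forall l, (l < m)%nat -> In (x l) Bx).
  { intros l Hl. unfold x. apply nth_In. rewrite HlenB. apply Nat.Div0.div_lt_upper_bound. unfold m in Hl. lia. }
  assert (HxZ : forall l, (l < m)%nat -> Zpt d (x l)).
  { intros l Hl. apply (proj1 (proj1 (In_box _ _ _ _) (Hxin l Hl))). }
  assert (Hjj : forall l, (jj l < k)%nat) by (intros; unfold jj; apply Nat.mod_upper_bound; lia).
  assert (FE1 : forall l y, in_eigenspace D C Cone (u l y)).
  { intros l y i Hi. unfold u. set (v := Shift D S P (F l) y).
    rewrite mvmul_add, mvmul_assoc. rewrite (mvmul_ext_m D (mmul D C C) mId) by (intros; apply HCC; auto).
    rewrite mvmul_id by auto.
    unfold vscal, vadd. ring. }
  assert (Fout : forall l y, (l < m)%nat -> Zpt d y -> ~ In y By -> forall i, u l y i = Czero).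
  { intros l y Hl Hy Hn.
    assert (HS0 : forall j, Shift D S P (F l) y j = Czero).
    { intro j. unfold Shift. rewrite lvsum_eval. apply csumL_zero. intros s Hs.
      unfold F, tr, delta0.
      destruct (is_origin d (zsub (zsub y s) (x l))) eqn:Eo.
      - exfalso. apply Hn. rewrite is_origin_iff in Eo. apply In_box. split; auto.
        intros kk Hkk. specialize (Eo kk Hkk). pose proof (Ha s Hs kk Hkk).
        pose proof (proj2 (proj1 (In_box _ _ _ _) (Hxin l Hl)) kk Hkk). unfold zsub in Eo. lia.
      - apply mvmul_zero. }
    intro i. unfold u, vadd. rewrite HS0. rewrite (mvmul_ext_v D C _ vzero), mvmul_zero. ring.
    intros; apply HS0. }
  assert (FV : forall y, Zpt d y -> forall i, (i < D)%nat ->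
            Cadd (Shift D S P f y i) (mvmul D C (Shift D S P f y) i) = Czero).
  { intros y Hy i Hi. unfold f. rewrite Shift_comb. unfold fcomb at 1 2. rewrite mvmul_comb.
    rewrite <- csum_add.
    transitivity (csum m (fun l => Cmul (c l) (u l y i))).
    { apply csum_ext; intros. unfold u, vadd. change (fun k0 => Shift D S P (F j) y k0) with (Shift D S P (F j) y). ring. }
    destruct (classic (In y By)) as [Hin|Hnin].
    - destruct (In_nth _ _ (fun _ => 0%Z) Hin) as [q' [Hq' Hqy]]. assert (Hq2 : (q' < nB')%nat) by (rewrite <- HlenB'; exact Hq').
      transitivity (csum m (fun l => Cmul (c l) (csum r (fun t => Cmul (Am (q' * r + t)%nat l) (b t i))))).
      { apply csum_ext; intros l Hl. f_equal. rewrite (Hcoef (u l y) (FE1 l y) i Hi).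
        apply csum_ext; intros t Ht. unfold Am. destruct (Hdm q' t Ht) as [-> ->]. assert (Hqy' : nth q' By (fun _ : nat => 0%Z) = y) by exact Hqy. rewrite Hqy'. reflexivity. }
      transitivity (csum m (fun l => csum r (fun t => Cmul (b t i) (Cmul (Am (q' * r + t)%nat l) (c l))))).
      { apply csum_ext; intros. rewrite csum_scal. apply csum_ext; intros; ring. }
      rewrite csum_swap. apply csum_zero. intros t Ht. rewrite <- csum_scal. rewrite Hsol. ring.
      unfold p. nia.
    - apply csum_zero. intros l Hl. rewrite Fout; auto. ring. }
  assert (FCf : forall y i, (i < D)%nat -> mvmul D C (f y) i = Copp (f y i)).
  { intros y i Hi. unfold f, fcomb. rewrite mvmul_comb. rewrite csum_opp. apply csum_ext. intros l Hl.
    unfold F, tr, delta0. destruct (is_origin d (zsub y (x l))).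
    - change (fun k0 : nat => w (jj l) k0) with (w (jj l)). rewrite (Hw (jj l) (Hjj l) i Hi). unfold vscal. ring.
    - change (fun k0 : nat => vzero k0) with vzero. rewrite mvmul_zero. unfold vzero. ring. }
  assert (Hopp : forall (A : cmat) (g : cvec) j, mvmul D A (fun t => Copp (g t)) j = Copp (mvmul D A g j)).
  { intros. unfold mvmul. rewrite csum_opp. apply csum_ext; intros; ring. }
  assert (HoppL : forall (L : list pt) (g : pt -> Cx), csumL L (fun s => Copp (g s)) = Copp (csumL L g)).
  { intros. transitivity (Cmul (Copp Cone) (csumL L g)). rewrite csumL_scal. apply csumL_ext; intros; ring. ring. }
  assert (FU : feq d D (UC D S P C f) f).
  { intros y Hy i Hi. unfold UC.
    rewrite <- (SadjS d D S P f y i Hres Hi).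
    unfold ShiftAdj at 1 2. rewrite !lvsum_eval. apply csumL_ext. intros s Hs.
    apply mvmul_ext_v. intros j Hj.
    assert (Hz : Zpt d (zadd y s)) by (apply Zpt_zadd; auto; rewrite Forall_forall in HZS; auto).
    set (z := zadd y s).
    assert (E1 : forall j', Shift D S P (Coin D C f) z j' = Copp (Shift D S P f z j')).
    { intro j'. unfold Shift. rewrite !lvsum_eval. rewrite <- HoppL. apply csumL_ext. intros s' Hs'.
      rewrite <- Hopp. apply mvmul_ext_v. intros t Ht. unfold Coin. apply FCf; auto. }
    unfold Coin at 1. rewrite (mvmul_ext_v D C _ (fun j' => Copp (Shift D S P f z j'))) by (intros; apply E1).
    rewrite Hopp. pose proof (FV z Hz j Hj).
    transitivity (Csub Czero (mvmul D C (Shift D S P f z) j)).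
    unfold Csub; ring. rewrite <- H. unfold Csub. ring. }
  assert (Hvz : forall v : cvec, (forall i, (i < D)%nat -> v i = Czero) -> vnorm2 D v = 0).
  { intros v Hv. unfold vnorm2. assert (forall n, (n <= D)%nat -> rsum n (fun i => Cnorm2 (v i)) = 0).
    { induction n; intros; simpl. auto. rewrite IHn by lia. rewrite Hv by lia. unfold Cnorm2; simpl. ring. }
    apply H; lia. }
  assert (Fsupp : forall y, Zpt d y -> ~ In y Bx -> forall i, f y i = Czero).
  { intros y Hy Hn i. unfold f, fcomb. apply csum_zero. intros l Hl. unfold F, tr, delta0.
    destruct (is_origin d (zsub y (x l))) eqn:Eo.
    - exfalso. apply Hn. rewrite (origin_eq d y (x l) Hy (HxZ l Hl) Eo). auto.
    - unfold vzero. ring. }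
  assert (Fl2 : l2 d D f).
  { exists (rsumL Bx (fun y => vnorm2 D (f y))). intros L' Hnd HZL.
    change (rsumL L' (fun y => vnorm2 D (f y)) <= rsumL Bx (fun y => vnorm2 D (f y))).
    apply rsumL_bound; auto.
    - intros y. unfold vnorm2. apply rsum_ge0. intros; apply Cnorm2_ge0.
    - intros y Hy Hnz. apply NNPP. intro Hn. apply Hnz. apply Hvz. intros i Hi.
      apply Fsupp; auto. rewrite Forall_forall in HZL; auto. }
  set (q0 := (l0 / k)%nat). set (j0 := (l0 mod k)%nat).
  assert (Hq0 : (q0 < nB)%nat) by (unfold q0; apply Nat.Div0.div_lt_upper_bound; unfold m in Hl0; lia).
  assert (Hj0 : (j0 < k)%nat) by (apply Hjj).
  set (y0 := x l0).
  assert (Hy0Z : Zpt d y0) by (apply HxZ; auto).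
  assert (Fy0 : forall i, f y0 i = csum k (fun j => Cmul (c (q0 * k + j)%nat) (w j i))).
  { intro i. unfold f, fcomb. unfold m. rewrite csum_split.
    rewrite (csum_single nB _ q0 Hq0).
    - apply csum_ext. intros j Hj. f_equal. unfold F, tr, delta0.
      assert (Ex : x (q0 * k + j)%nat = y0).
      { unfold x, y0. destruct (Hdk q0 j Hj) as [-> _]. reflexivity. }
      rewrite Ex, origin_self. unfold jj. destruct (Hdk q0 j Hj) as [_ ->]. reflexivity.
    - intros q Hq Hne. apply csum_zero. intros j Hj. unfold F, tr, delta0.
      destruct (is_origin d (zsub y0 (x (q * k + j)%nat))) eqn:Eo.
      + exfalso. apply Hne.
        assert (Hl : (q * k + j < m)%nat) by (unfold m; nia).
        pose proof (origin_eq d _ _ Hy0Z (HxZ _ Hl) Eo) as Eq.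
        unfold y0, x in Eq. destruct (Hdk q j Hj) as [Hd _]. rewrite Hd in Eq.
        fold q0 in Eq.
        apply (NoDup_nth Bx (fun _ => 0%Z)); auto. apply NoDup_box. rewrite HlenB; auto. rewrite HlenB; auto.
      + unfold vzero. ring. }
  assert (Fnz : exists i, (i < D)%nat /\ f y0 i <> Czero).
  { apply NNPP. intro Hn. apply Hcl0.
    assert (Hl0e : l0 = (q0 * k + j0)%nat) by (unfold q0, j0; pose proof (Nat.div_mod_eq l0 k); lia).
    rewrite Hl0e. apply (Hwi (fun j => c (q0 * k + j)%nat)); auto.
    intros i Hi. rewrite <- Fy0. apply NNPP. intro H. apply Hn. eauto. }
  assert (Wnz : forall j, (j < k)%nat -> exists i, (i < D)%nat /\ w j i <> Czero).
  { intros j Hj. apply NNPP. intro Hn.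
    assert (Hc1 : (fun t => if Nat.eqb t j then Cone else Czero) j = Czero).
    { apply (Hwi (fun t => if Nat.eqb t j then Cone else Czero)); auto.
      intros i Hi. rewrite (csum_single k _ j Hj).
      - rewrite Nat.eqb_refl. assert (w j i = Czero) by (apply NNPP; intro; apply Hn; eauto). rewrite H. ring.
      - intros t Ht Hne. destruct (Nat.eqb_spec t j). lia. ring. }
    simpl in Hc1. rewrite Nat.eqb_refl in Hc1. inversion Hc1. lra. }
  destruct Fnz as [i0 [Hi0 Hfi0]].
  split.
  - exists f. split; auto. split. exists y0. split; auto. exists i0; auto.
    intros y Hy i Hi. rewrite FU; auto. unfold vscal. ring.
  - destruct (part2 d D S P C m c x (fun l => w (jj l)) y0 i0 HZS HxZ FU Hy0Z Hi0 Hfi0) as [l [Hl Hnot]].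
    exists (w (jj l)), (zsub y0 (x l)). split; [apply Wnz, Hjj|]. split.
    + apply Zpt_zsub; auto.
    + apply NNPP. intro Hnl. apply Hnot. intros eps Heps. apply NNPP. intro H1.
      apply Hnl. exists eps. split; auto. intro Nn. apply NNPP. intro H2. apply H1. exists Nn.
      intros n Hn. apply Rnot_le_lt. intro H3. apply H2. exists n; split; auto.
Qed.
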